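(* Let $E$ be a finite nonempty set, $X\in\mathcal{X}(2)\setminus\mathcal{X}^*(2)$, and let $f:2^E\to\mathbb{N}$ and $S,T\subseteq E$ satisfy: $X=\mathbb{B}_f(2)$; for every $U\subseteq E$ there is $\vec x\in\mathbb{B}_f(2)$ with $x(U)=f(U)$; and $f(S)=f(T)=f(S\cap T)=1$, $f(S\cup T)=2$. Then there are four distinct elements $e_1,e_2,e_3,e_4\in E$ and two vectors $\vec x,\vec y\in\mathbb{B}_f(2)$ such that: (1) $x(e_1)=x(e_2)=1$ with $e_1\in E\setminus(S\cup T)$ and $e_2\in S\cap T$; (2) $y(e_3)=y(e_4)=1$ with $e_3\in S\setminus T$ and $e_4\in T\setminus S$; (3) every $\vec z\in\mathbb{B}_f(2)\setminus\{\vec x,\vec y\}$ with $\mathrm{supp}(\vec z)\subseteq\{e_1,e_2,e_3,e_4\}$ satisfies $\mathrm{supp}(\vec z)\in\{\{e_1,e_3\},\{e_1,e_4\},\{e_1\}\}$.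
   Context: $\mathbb{N}=\{0,1,2,\dots\}$; $x(U)=\sum_{e\in U}x_e$, $x(e)=x_e$; $\mathrm{supp}(\vec x)=\{e: x_e\neq0\}$. For $f:2^E\to\mathbb{N}$, $\mathbb{B}_f(d)=\{\vec x\in\mathbb{N}^E: x(U)\le f(U)\ \forall U\subseteq E,\ x(E)=d\}$. $f$ is strictly positive if $f(U)>0$ for all nonempty $U$, normalized if $f(\emptyset)=0$, monotonic if $f(U)\le f(V)$ for $U\subseteq V$. $\mathcal{X}(d)=\{\mathbb{B}_f(d): f \text{ strictly positive, normalized, monotonic}\}$, $\mathcal{X}^*(d)=\{\mathbb{B}_f(d): f\text{ strictly positive, normalized, monotonic, submodular}\}$. *)

(* Defs.v *)
From mathcomp Require Import all_boot.
Set Implicit Arguments. Unset Strict Implicit. Unset Printing Implicit Defensive.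

Definition vsum (E : finType) (x : E -> nat) (U : {set E}) : nat :=
  \sum_(e in U) x e.

Definition supp (E : finType) (x : E -> nat) : {set E} := [set e | x e != 0].

Definition inB (E : finType) (f : {set E} -> nat) (d : nat) (x : E -> nat) : Prop :=
  (forall U : {set E}, vsum x U <= f U) /\ vsum x setT = d.

Definition strictly_positive (E : finType) (f : {set E} -> nat) : Prop :=
  forall U : {set E}, U != set0 -> 0 < f U.
Definition normalized (E : finType) (f : {set E} -> nat) : Prop := f set0 = 0.
Definition monotonic (E : finType) (f : {set E} -> nat) : Prop :=
  forall U V : {set E}, U \subset V -> f U <= f V.
Definition submodular (E : finType) (f : {set E} -> nat) : Prop :=
  forall U V : {set E}, f (U :|: V) + f (U :&: V) <= f U + f V.

Definition inXcal (E : finType) (d : nat) (X : (E -> nat) -> Prop) : Prop :=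
  exists g : {set E} -> nat,
    [/\ strictly_positive g, normalized g, monotonic g &
        forall x, X x <-> inB g d x].
Definition inXcal_star (E : finType) (d : nat) (X : (E -> nat) -> Prop) : Prop :=
  exists g : {set E} -> nat,
    [/\ strictly_positive g, normalized g, monotonic g, submodular g &
        forall x, X x <-> inB g d x].

(* Main.v *)
Require Import Defs.
From mathcomp Require Import all_boot.
From mathcomp Require Import zify.
Set Implicit Arguments. Unset Strict Implicit.

Section Aux.
Variable E : finType.
Implicit Types (x : E -> nat) (A B U : {set E}).

Lemma vsumE x A : vsum x A = \sum_e (if e \in A then x e else 0).
Proof. by rewrite /vsum big_mkcond. Qed.

Lemma vsumUI x A B : vsum x (A :|: B) + vsum x (A :&: B) = vsum x A + vsum x B.
Proof.
rewrite !vsumE -!big_split; apply: eq_bigr => e _; rewrite !inE.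
by case: (e \in A); case: (e \in B) => /=; lia.
Qed.

Lemma vsumC x A : vsum x A + vsum x (~: A) = vsum x setT.
Proof.
rewrite !vsumE -!big_split; apply: eq_bigr => e _; rewrite !inE.
by case: (e \in A) => /=; lia.
Qed.

Lemma vsumID x A B : vsum x A = vsum x (A :&: B) + vsum x (A :\: B).
Proof.
rewrite !vsumE -!big_split; apply: eq_bigr => e _; rewrite !inE.
by case: (e \in A); case: (e \in B) => /=; lia.
Qed.

Lemma vsum_ge1 x U a : a \in U -> x a <= vsum x U.
Proof. by move=> aU; rewrite /vsum (bigD1 a) //= leq_addr. Qed.

Lemma vsum_ge2 x U a b : a != b -> a \in U -> b \in U -> x a + x b <= vsum x U.
Proof.
move=> ab aU bU; rewrite /vsum (bigD1 a) //= (bigD1 b) /=; last by rewrite bU eq_sym ab.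
by rewrite addnA leq_addr.
Qed.

Lemma vsum_ge3 x U a b c : a != b -> a != c -> b != c ->
  a \in U -> b \in U -> c \in U -> x a + x b + x c <= vsum x U.
Proof.
move=> ab ac bc aU bU cU; rewrite /vsum (bigD1 a) //= (bigD1 b) /=; last by rewrite bU eq_sym ab.
rewrite (bigD1 c) /=; last by rewrite cU eq_sym ac eq_sym bc.
by rewrite !addnA leq_addr.
Qed.

Lemma sum1_ex x U : vsum x U = 1 -> exists2 e, e \in U & x e = 1.
Proof.
move=> H; case: (pickP [pred e | (e \in U) && (x e != 0)]) => [e /andP[eU xe]|H0].
  exists e => //; have := vsum_ge1 x eU; rewrite H; move: xe; lia.
move: H; rewrite /vsum big1 // => e eU; have := H0 e; rewrite /= eU /=.
by move/negbFE/eqP.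
Qed.

Lemma sum4 (z : E -> nat) a b c d : uniq [:: a; b; c; d] ->
  supp z \subset [set a; b; c; d] -> vsum z setT = z a + z b + z c + z d.
Proof.
rewrite /= !inE => /and4P[/norP[ab /norP[ac ad]] /norP[bc bd] cd _] Hs.
rewrite /vsum (bigD1 a) ?inE //= (bigD1 b) /=; last by rewrite inE eq_sym ab.
rewrite (bigD1 c) /=; last by rewrite inE eq_sym ac eq_sym bc.
rewrite (bigD1 d) /=; last by rewrite inE eq_sym ad eq_sym bd eq_sym cd.
rewrite big1 ?addn0 ?addnA // => i /andP[/andP[/andP[/andP[_ ia] ib] ic] id].
apply/eqP; apply/negPn/negP => nz.
have := subsetP Hs i; rewrite !inE nz => /(_ isT).
by rewrite (negbTE ia) (negbTE ib) (negbTE ic) (negbTE id).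
Qed.

End Aux.

Theorem lemma6p3 (E : finType) (X : (E -> nat) -> Prop)
    (f : {set E} -> nat) (S T : {set E}) :
  0 < #|E| ->
  inXcal 2 X -> ~ inXcal_star 2 X ->
  (forall x, X x <-> inB f 2 x) ->
  (forall U : {set E}, exists x, inB f 2 x /\ vsum x U = f U) ->
  f S = 1 -> f T = 1 -> f (S :&: T) = 1 -> f (S :|: T) = 2 ->
  exists (e1 e2 e3 e4 : E) (x y : E -> nat),
    [/\ uniq [:: e1; e2; e3; e4], inB f 2 x /\ inB f 2 y,
      [/\ x e1 = 1, x e2 = 1, e1 \notin S :|: T & e2 \in S :&: T],
      [/\ y e3 = 1, y e4 = 1, e3 \in S :\: T & e4 \in T :\: S] &
      forall z : E -> nat, inB f 2 z -> ~ (z =1 x) -> ~ (z =1 y) ->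
        supp z \subset [set e1; e2; e3; e4] ->
        supp z = [set e1; e3] \/ supp z = [set e1; e4] \/ supp z = [set e1]].
Proof.
move=> _ _ _ _ tight fS fT fI fU.
have [x [[xle xtot] xI]] := tight (S :&: T).
have [y [[yle ytot] yU]] := tight (S :|: T).
rewrite fI in xI; rewrite fU in yU.
have [e2 e2I xe2] := sum1_ex xI.
have xUI := vsumUI x S T.
have xS := xle S; have xT := xle T; rewrite fS in xS; rewrite fT in xT.
have xU1 : vsum x (S :|: T) = 1.
  have := vsum_ge1 x (_ : e2 \in S :|: T); rewrite xe2.
  move: e2I; rewrite !inE => /andP[-> _] /(_ isT); lia.
have xC := vsumC x (S :|: T).
have [e1 e1C xe1] : exists2 e, e \in ~: (S :|: T) & x e = 1.
  by apply: sum1_ex; lia.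
have yUI := vsumUI y S T.
have yS := yle S; have yT := yle T; rewrite fS in yS; rewrite fT in yT.
have ySD := vsumID y S T; have yTD := vsumID y T S.
rewrite setIC in yTD.
have [e3 e3D ye3] : exists2 e, e \in S :\: T & y e = 1 by apply: sum1_ex; lia.
have [e4 e4D ye4] : exists2 e, e \in T :\: S & y e = 1 by apply: sum1_ex; lia.
move: e1C e2I e3D e4D; rewrite !inE negb_or.
move=> /andP[e1S e1T] /andP[e2S e2T] /andP[e3T e3S] /andP[e4S e4T].
have neq : forall a b (P : {set E}), a \in P -> b \notin P -> a != b.
  by move=> a b P ha hb; apply: contraNneq hb => <-.
have n12 : e1 != e2 by rewrite eq_sym (neq _ _ S).
have n13 : e1 != e3 by rewrite eq_sym (neq _ _ S).
have n14 : e1 != e4 by rewrite eq_sym (neq _ _ T).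
have n23 : e2 != e3 by rewrite (neq _ _ T).
have n24 : e2 != e4 by rewrite (neq _ _ S).
have n34 : e3 != e4 by rewrite (neq _ _ S).
have xout : forall e, e != e1 -> e != e2 -> x e = 0.
  move=> e h1 h2; have h1' : e1 != e by rewrite eq_sym.
  have h2' : e2 != e by rewrite eq_sym.
  have H := vsum_ge3 x n12 h1' h2' (in_setT e1) (in_setT e2) (in_setT e).
  rewrite xtot xe1 xe2 in H; clear -H; lia.
have yout : forall e, e != e3 -> e != e4 -> y e = 0.
  move=> e h1 h2; have h1' : e3 != e by rewrite eq_sym.
  have h2' : e4 != e by rewrite eq_sym.
  have H := vsum_ge3 y n34 h1' h2' (in_setT e3) (in_setT e4) (in_setT e).
  rewrite ytot ye3 ye4 in H; clear -H; lia.
have uq : uniq [:: e1; e2; e3; e4].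
  by rewrite /= !inE (negbTE n12) (negbTE n13) (negbTE n14) (negbTE n23) (negbTE n24) (negbTE n34).
have m1 : e1 \notin S :|: T by rewrite !inE (negbTE e1S) (negbTE e1T).
have m2 : e2 \in S :&: T by rewrite !inE e2S e2T.
have m3 : e3 \in S :\: T by rewrite !inE e3S e3T.
have m4 : e4 \in T :\: S by rewrite !inE e4S e4T.
exists e1, e2, e3, e4, x, y; split; [done | by split | by split | by split | ].
move=> z [zle ztot] nx ny hsub.
have z4 := sum4 uq hsub; rewrite ztot in z4.
have zS := vsum_ge2 z n23 e2S e3S; have zT := vsum_ge2 z n24 e2T e4T.
have := zle S; have := zle T; rewrite fS fT => zS1 zT1.
have zout : forall e, e != e1 -> e != e2 -> e != e3 -> e != e4 -> z e = 0.
  move=> e h1 h2 h3 h4; apply/eqP; apply/negPn/negP => nz.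
  have := subsetP hsub e; rewrite !inE nz => /(_ isT).
  by rewrite (negbTE h1) (negbTE h2) (negbTE h3) (negbTE h4).
have cases : (z e1 = 1 /\ z e2 = 1 /\ z e3 = 0 /\ z e4 = 0) \/
                 (z e1 = 0 /\ z e2 = 0 /\ z e3 = 1 /\ z e4 = 1) \/
                 (z e1 = 1 /\ z e2 = 0 /\ z e3 = 1 /\ z e4 = 0) \/
                 (z e1 = 1 /\ z e2 = 0 /\ z e3 = 0 /\ z e4 = 1) \/
                 (z e1 = 2 /\ z e2 = 0 /\ z e3 = 0 /\ z e4 = 0).
  move: z4 zS zT zS1 zT1; clear; lia.
have suppE : forall e, (e \in supp z) = (z e != 0) by move=> e; rewrite inE.
case: cases => [|[|[|[|]]]] [z1 [z2 [z3 z4']]].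
- exfalso; apply: nx => e.
  have [->|h1] := eqVneq e e1; first by rewrite z1 xe1.
  have [->|h2] := eqVneq e e2; first by rewrite z2 xe2.
  rewrite (xout e h1 h2).
  have [->|h3] := eqVneq e e3; first by [].
  have [->|h4] := eqVneq e e4; first by [].
  exact: zout.
- exfalso; apply: ny => e.
  have [->|h3] := eqVneq e e3; first by rewrite z3 ye3.
  have [->|h4] := eqVneq e e4; first by rewrite z4' ye4.
  rewrite (yout e h3 h4).
  have [->|h1] := eqVneq e e1; first by [].
  have [->|h2] := eqVneq e e2; first by [].
  exact: zout.
have n21 : e2 != e1 by rewrite eq_sym.
have n31 : e3 != e1 by rewrite eq_sym.
have n32 : e3 != e2 by rewrite eq_sym.
have n41 : e4 != e1 by rewrite eq_sym.
have n42 : e4 != e2 by rewrite eq_sym.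
have n43 : e4 != e3 by rewrite eq_sym.
all: [> left | right; left | right; right]; apply/setP => e; rewrite suppE !inE.
all: have [->|h1] := eqVneq e e1; [by rewrite ?z1 ?eqxx ?(negbTE n12) ?(negbTE n13) ?(negbTE n14) ?(negbTE n21) ?(negbTE n23) ?(negbTE n24) ?(negbTE n31) ?(negbTE n32) ?(negbTE n34) ?(negbTE n41) ?(negbTE n42) ?(negbTE n43) | ].
all: have [->|h2] := eqVneq e e2; [by rewrite ?z2 ?eqxx ?(negbTE n12) ?(negbTE n13) ?(negbTE n14) ?(negbTE n21) ?(negbTE n23) ?(negbTE n24) ?(negbTE n31) ?(negbTE n32) ?(negbTE n34) ?(negbTE n41) ?(negbTE n42) ?(negbTE n43) | ].
all: have [->|h3] := eqVneq e e3; [by rewrite ?z3 ?eqxx ?(negbTE n12) ?(negbTE n13) ?(negbTE n14) ?(negbTE n21) ?(negbTE n23) ?(negbTE n24) ?(negbTE n31) ?(negbTE n32) ?(negbTE n34) ?(negbTE n41) ?(negbTE n42) ?(negbTE n43) | ].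
all: have [->|h4] := eqVneq e e4; [by rewrite ?z4' ?eqxx ?(negbTE n12) ?(negbTE n13) ?(negbTE n14) ?(negbTE n21) ?(negbTE n23) ?(negbTE n24) ?(negbTE n31) ?(negbTE n32) ?(negbTE n34) ?(negbTE n41) ?(negbTE n42) ?(negbTE n43) | ].
all: by rewrite zout // ?(negbTE h1) ?(negbTE h3) ?(negbTE h4).
Qed.
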